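(* Let $G$ and $H$ be finite directed graphs without sinks or sources, each having a unique terminal component, $C$ and $C'$ respectively. If $\chi : X_G \to X_H$ is a conjugacy, then $\chi(X_C) = X_{C'}$.
   Context: For a finite directed graph $H$: a vertex is recurrent if there is a path from it to itself; recurrent vertices $v,w$ are equivalent if there are paths from $v$ to $w$ and from $w$ to $v$; the equivalence classes are the components. A component $C$ is terminal if there is no path from a vertex of $C$ to a vertex of another component. $X_H$ is the edge shift of $H$ and $X_C$ the edge shift of the subgraph with vertex set $C$ and all edges of $H$ with both endpoints in $C$. A conjugacy is a shift-commuting homeomorphism. *)

(* Defs.v *)
From mathcomp Require Import all_boot.
From Stdlib Require Import ZArith.
Set Implicit Arguments. Unset Strict Implicit. Unset Printing Implicit Defensive.

(* A finite directed graph (multi-edges allowed): vertex type V, edge type E,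
   source and target maps s t : E -> V. *)
Section Graph.
Variables (V E : finType) (s t : E -> V).

Definition adj : rel V := fun v w => [exists e : E, (s e == v) && (t e == w)].

Definition reach (v w : V) : bool := connect adj v w.

Definition recurrent (v : V) : bool :=
  [exists e : E, (s e == v) && reach (t e) v].

Definition is_component (C : {set V}) : Prop :=
  exists v, recurrent v /\
    C = [set w | recurrent w && reach v w && reach w v].

Definition is_terminal (C : {set V}) : Prop :=
  is_component C /\
  forall D : {set V}, is_component D -> D <> C ->
    forall v w, v \in C -> w \in D -> ~~ reach v w.

Definition no_sink_source : Prop :=
  forall v : V, (exists e, s e = v) /\ (exists e, t e = v).

(* the edge shift of the subgraph with vertex set C (all edges with both
   endpoints in C): bi-infinite sequences of such edges, consecutive. *)
Definition in_edge_shift_on (C : {set V}) (x : Z -> E) : Prop :=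
  forall i : Z, s (x i) \in C /\ t (x i) \in C /\ t (x i) = s (x (i + 1)%Z).

Definition in_edge_shift (x : Z -> E) : Prop :=
  forall i : Z, t (x i) = s (x (i + 1)%Z).
End Graph.

Definition shift (A : Type) (x : Z -> A) : Z -> A := fun i => x (i + 1)%Z.

(* continuity of f on the subspace X of A^Z (product topology of discrete
   alphabets), written out via the cylinder-set basis *)
Definition cont_on (A B : Type) (X : (Z -> A) -> Prop)
    (f : (Z -> A) -> (Z -> B)) : Prop :=
  forall x, X x -> forall n : nat, exists m : nat, forall y, X y ->
    (forall i : Z, (Z.abs i <= Z.of_nat m)%Z -> y i = x i) ->
    forall i : Z, (Z.abs i <= Z.of_nat n)%Z -> f y i = f x i.

Definition conjugacy (A B : Type) (X : (Z -> A) -> Prop) (Y : (Z -> B) -> Prop)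
    (f : (Z -> A) -> (Z -> B)) : Prop :=
  (forall x, X x -> Y (f x)) /\
  (exists g : (Z -> B) -> (Z -> A),
     (forall y, Y y -> X (g y)) /\
     (forall x, X x -> g (f x) = x) /\
     (forall y, Y y -> f (g y) = y) /\
     cont_on X f /\ cont_on Y g) /\
  (forall x, X x -> f (shift x) = shift (f x)).

(* Main.v *)
Require Import Defs.
From mathcomp Require Import all_boot.
From Stdlib Require Import ZArith Lia FunctionalExtensionality.
Set Implicit Arguments. Unset Strict Implicit. Unset Printing Implicit Defensive.

Section G.
Variables (V E : finType) (s t : E -> V).
Local Notation R := (reach s t).

Lemma reach_refl v : R v v. Proof. exact: connect0. Qed.
Lemma reach_trans u v w : R u v -> R v w -> R u w. Proof. exact: connect_trans. Qed.
Lemma reach_edge e : R (s e) (t e).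
Proof. apply: connect1; apply/existsP; exists e; by rewrite !eqxx. Qed.

Lemma min_reach : no_sink_source s t -> forall a, exists u,
  R a u /\ recurrent s t u /\ (forall w, R u w -> R w u).
Proof.
move=> ns a.
pose F u := #|[set w | R u w]|.
case: (arg_minnP F (reach_refl a)) => u au minu.
have key : forall w, R u w -> R w u.
  move=> w uw; have aw := reach_trans au uw.
  have le := minu w aw.
  have sub : [set z | R w z] \subset [set z | R u z].
    by apply/subsetP => z; rewrite !inE => wz; exact: reach_trans uw wz.
  have eq : [set z | R w z] = [set z | R u z].
    by apply/eqP; rewrite eqEcard sub.
  have : u \in [set z | R w z] by rewrite eq inE reach_refl.
  by rewrite inE.
exists u; split => //; split => //.
case: (ns u) => [[e se] _]; apply/existsP; exists e; rewrite se eqxx /=.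
apply: key; rewrite -se; exact: reach_edge.
Qed.

Lemma class_eq u v : R u v -> R v u ->
  [set w | recurrent s t w && R u w && R w u] = [set w | recurrent s t w && R v w && R w v].
Proof.
move=> uv vu; apply/setP => z; rewrite !inE.
case: (recurrent s t z) => //=.
apply/andP/andP => [[h1 h2]|[h1 h2]]; split.
- exact: reach_trans vu h1.
- exact: reach_trans h2 uv.
- exact: reach_trans uv h1.
- exact: reach_trans h2 vu.
Qed.

Lemma term_closed C : no_sink_source s t -> is_terminal s t C ->
  forall v w, v \in C -> R v w -> w \in C.
Proof.
move=> ns [[c0 [rc0 defC]] term] v w vC.
have vc0 : R v c0 /\ R c0 v by move: vC; rewrite defC inE => /andP[/andP[_ ->] ->].
have claim : forall w, R v w -> R w c0.
  move=> w' vw.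
  case: (min_reach ns w') => u [wu [ru ku]].
  pose D := [set z | recurrent s t z && R u z && R z u].
  have Dc : is_component s t D by exists u.
  have uD : u \in D by rewrite inE ru reach_refl.
  case: (eqVneq D C) => [DC|DC].
    have : u \in C by rewrite -DC.
    rewrite defC inE => /andP[/andP[_ _] uc0].
    exact: reach_trans wu uc0.
  have DC' : D <> C by apply/eqP.
  by have := term D Dc DC' v u vC uD; rewrite (reach_trans vw wu).
move=> hvw; rewrite defC inE; apply/andP; split; last exact: claim.
apply/andP; split; last exact: reach_trans (proj2 vc0) hvw.
case: (ns w) => [[e se] _]; apply/existsP; exists e; rewrite se eqxx /=.
apply: reach_trans (claim _ _) (reach_trans (proj2 vc0) hvw).
apply: reach_trans hvw _; rewrite -se; exact: reach_edge.
Qed.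

Lemma reach_C C : no_sink_source s t -> is_terminal s t C ->
  (forall D, is_terminal s t D -> D = C) ->
  forall a b, b \in C -> R a b.
Proof.
move=> ns [[c0 [rc0 defC]] _] uniq a b bC.
case: (min_reach ns a) => u [au [ru ku]].
pose D := [set z | recurrent s t z && R u z && R z u].
have Dc : is_component s t D by exists u.
have uD : u \in D by rewrite inE ru reach_refl.
have DT : is_terminal s t D.
  split => // D' [v' [rv' defD']] ne v w vD wD'; apply/negP => vw.
  apply: ne; rewrite defD' /D.
  move: vD wD'; rewrite defD' !inE => /andP[/andP[_ uv] _] /andP[/andP[rw v'w] wv'].
  have uw := reach_trans uv vw.
  by apply: class_eq; [exact: reach_trans v'w (ku _ uw) | exact: reach_trans uw wv'].
have DC := uniq D DT.
have : u \in C by rewrite -DC.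
move: bC; rewrite defC !inE => /andP[/andP[_ c0b] _] /andP[_ uc0].
exact: reach_trans au (reach_trans uc0 c0b).
Qed.

Lemma path_reach q : in_edge_shift s t q -> forall (n : nat) j,
  R (s (q j)) (s (q (j + Z.of_nat n)%Z)).
Proof.
move=> hq; elim=> [|n IH] j.
  by rewrite Z.add_0_r reach_refl.
apply: reach_trans (IH j) _.
have -> : (j + Z.of_nat n.+1 = (j + Z.of_nat n) + 1)%Z by lia.
rewrite -hq; exact: reach_edge.
Qed.


Lemma through_edge : no_sink_source s t -> forall e0 : E, exists z,
  in_edge_shift s t z /\ z 0%Z = e0.
Proof.
move=> ns e0.
pose nxt v := odflt e0 [pick e | s e == v].
pose prv v := odflt e0 [pick e | t e == v].
have snxt : forall v, s (nxt v) = v.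
  move=> v; rewrite /nxt; case: pickP => [e /eqP //|none] /=.
  by case: (ns v) => [[e se] _]; move: (none e); rewrite se eqxx.
have tprv : forall v, t (prv v) = v.
  move=> v; rewrite /prv; case: pickP => [e /eqP //|none] /=.
  by case: (ns v) => [_ [e se]]; move: (none e); rewrite se eqxx.
pose fix f n := if n is n'.+1 then nxt (t (f n')) else e0.
pose fix b n := if n is n'.+1 then prv (s (b n')) else e0.
exists (fun k => if (0 <=? k)%Z then f (Z.to_nat k) else b (Z.to_nat (- k))).
split => [k|] /=; last by [].
case: (Z.leb_spec 0 k) => hk.
  have -> : (0 <=? k + 1)%Z = true by apply/Z.leb_le; lia.
  have -> : Z.to_nat (k + 1) = (Z.to_nat k).+1 by lia.
  by rewrite /= snxt.
case: (Z.leb_spec 0 (k + 1)) => hk1.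
  idtac.
  have -> : Z.to_nat (- k) = S O by lia.
  have -> : Z.to_nat (k + 1) = O by lia.
  by rewrite /= tprv.
have -> : Z.to_nat (- k) = (Z.to_nat (- (k + 1))).+1 by lia.
by rewrite /= tprv.
Qed.

Lemma glue (x : Z -> E) (b : Z) :
  (forall k, (b <= k)%Z -> t (x k) = s (x (k + 1)%Z)) ->
  forall (q : seq V) (w : Z -> E) (a : Z),
  (forall k, (k < a)%Z -> t (w k) = s (w (k + 1)%Z)) ->
  path (adj s t) (t (w a)) q -> last (t (w a)) q = s (x b) ->
  exists p d, in_edge_shift s t p /\ (forall k, (k <= a)%Z -> p k = w k) /\
    (forall k, (b <= k)%Z -> p (k + d)%Z = x k) /\ (a + 1 - b <= d)%Z.
Proof.
move=> hx; elim=> [|v1 q IH] w a hw.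
  move=> _ /= ea.
  exists (fun k => if (k <=? a)%Z then w k else x (k - (a + 1 - b))%Z), (a + 1 - b)%Z.
  split; last split; last split.
  - move=> k /=; case: (Z.leb_spec k a) => hk.
      case: (Z.leb_spec (k + 1) a) => hk1; first by apply: hw; lia.
      have -> : k = a by lia.
      by rewrite ea; congr (s (x _)); lia.
    case: (Z.leb_spec (k + 1) a) => hk1; first lia.
    rewrite hx; last lia.
    by congr (s (x _)); lia.
  - by move=> k hk /=; have -> : (k <=? a)%Z = true by apply/Z.leb_le.
  - move=> k hk /=; have -> : (k + (a + 1 - b) <=? a)%Z = false by apply/Z.leb_gt; lia.
    by congr x; lia.
  - lia.
move=> /= /andP[/existsP[e /andP[/eqP se /eqP te]] pq] lq.
pose w' k := if (k <=? a)%Z then w k else e.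
have w'a1 : w' (a + 1)%Z = e.
  by rewrite /w'; have -> : (a + 1 <=? a)%Z = false by apply/Z.leb_gt; lia.
have hw' : forall k, (k < a + 1)%Z -> t (w' k) = s (w' (k + 1)%Z).
  move=> k hk; case: (Z.leb_spec k (a - 1)) => hk1.
    rewrite /w'; have -> : (k <=? a)%Z = true by apply/Z.leb_le; lia.
    have -> : (k + 1 <=? a)%Z = true by apply/Z.leb_le; lia.
    by apply: hw; lia.
  have -> : k = a by lia.
  rewrite w'a1 se /w'; by have -> : (a <=? a)%Z = true by apply/Z.leb_le; lia.
have := IH w' (a + 1)%Z hw'; rewrite w'a1 te => /(_ pq lq) [p [d [hp [pw [px hd]]]]].
exists p, d; split => //; split; last split => //; last lia.
move=> k hk; rewrite pw; last lia.
by rewrite /w'; have -> : (k <=? a)%Z = true by apply/Z.leb_le.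
Qed.
End G.

Definition tr (A : Type) (d : Z) (x : Z -> A) : Z -> A := fun k => x (k + d)%Z.

Lemma tr_in (V E : finType) (s t : E -> V) x d :
  in_edge_shift s t x -> in_edge_shift s t (tr d x).
Proof.
move=> hx k; rewrite /tr hx; congr (s (x _)); lia.
Qed.

Lemma tr_comm (V E : finType) (s t : E -> V) (B : Type) (f : (Z -> E) -> Z -> B) :
  (forall x, in_edge_shift s t x -> f (Defs.shift x) = Defs.shift (f x)) ->
  forall x, in_edge_shift s t x -> forall d, f (tr d x) = tr d (f x).
Proof.
move=> hf.
have hn : forall n x, in_edge_shift s t x ->
    f (tr (Z.of_nat n) x) = tr (Z.of_nat n) (f x).
  elim=> [|n IH] x hx.
    have e1 : forall (A : Type) (y : Z -> A), tr (Z.of_nat 0) y = y.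
      by move=> A y; apply: functional_extensionality => k; rewrite /tr Z.add_0_r.
    by rewrite !e1.
  have e2 : forall (A : Type) (y : Z -> A),
      tr (Z.of_nat n.+1) y = Defs.shift (tr (Z.of_nat n) y).
    by move=> A y; apply: functional_extensionality => k; rewrite /tr /Defs.shift; congr y; lia.
  by rewrite !e2 hf ?IH //; apply: tr_in.
move=> x hx d; case: (Z.leb_spec 0 d) => hd.
  by rewrite -(Z2Nat.id d hd) hn.
have e3 : forall (A : Type) (y : Z -> A),
    tr (Z.of_nat (Z.to_nat (- d))) (tr d y) = y.
  by move=> A y; apply: functional_extensionality => k; rewrite /tr; congr y; lia.
have hx' := tr_in d hx.
rewrite -{2}(e3 _ x) hn //.
by apply: functional_extensionality => k; rewrite /tr; congr (f _ _); lia.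
Qed.

Lemma part1 (V E V' E' : finType) (s t : E -> V) (s' t' : E' -> V')
  (C : {set V}) (C' : {set V'}) (f : (Z -> E) -> Z -> E') (g : (Z -> E') -> Z -> E) :
  no_sink_source s t -> no_sink_source s' t' -> is_terminal s t C ->
  (forall D, is_terminal s t D -> D = C) -> is_terminal s' t' C' ->
  (forall x, in_edge_shift s t x -> in_edge_shift s' t' (f x)) ->
  (forall y, in_edge_shift s' t' y -> in_edge_shift s t (g y)) ->
  (forall y, in_edge_shift s' t' y -> f (g y) = y) ->
  cont_on (in_edge_shift s t) f ->
  (forall x, in_edge_shift s t x -> f (Defs.shift x) = Defs.shift (f x)) ->
  forall x, in_edge_shift_on s t C x -> in_edge_shift_on s' t' C' (f x).
Proof.
move=> ns ns' tC uC tC' fX gY fg cf fsh x hxC.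
have hx : in_edge_shift s t x by move=> k; case: (hxC k) => _ [_ ->].
suff allC : forall i, s' (f x i) \in C'.
  move=> i; split; first exact: allC.
  by rewrite (fX x hx i); split => //; exact: allC.
move=> i; apply/negPn/negP => bad.
case: (tC') => [[v' [rv' defC']] _].
have rv'' := rv'.
case/existsP: rv'' => e' /andP[/eqP se' _].
case: (through_edge ns' e') => z [hz z0].
have zC : s' (z 0%Z) \in C' by rewrite z0 se' defC' inE rv' reach_refl.
pose w := g z.
have hw := gY z hz.
have fw : f w = z := fg z hz.
case: (cf w hw 0%N) => m1 hm1.
case: (cf x hx (Z.abs_nat i)) => m2 hm2.
pose a := Z.of_nat m1.
pose b := (- (Z.of_nat m2 + Z.abs i))%Z.
have r : reach s t (t (w a)) (s (x b)) by apply: (reach_C ns tC uC); case: (hxC b).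
case/connectP: r => q pq lq.
have [|p [d [hp [pw [px hd]]]]] := glue (x:=x) (b:=b) _ (w:=w) (a:=a) (fun k _ => hw k) pq (esym lq).
  by move=> k _; exact: hx k.
have fp0 : f p 0%Z = z 0%Z.
  rewrite -fw; apply: (hm1 p hp) => [k hk|]; last lia.
  by apply: pw; rewrite /a; lia.
have fpi : f p (i + d)%Z = f x i.
  have e := tr_comm fsh hp d.
  have -> : f p (i + d)%Z = tr d (f p) i by [].
  rewrite -e.
  apply: (hm2 _ (tr_in d hp)) => [k hk|]; last lia.
  by rewrite /tr; apply: px; rewrite /b; lia.
have fpX := fX p hp.
have := path_reach fpX (Z.to_nat (i + d)) 0%Z.
rewrite Z.add_0_l Z2Nat.id; last by rewrite /a /b in hd; lia.
rewrite fpi fp0 => rr; by rewrite (term_closed ns' tC' zC rr) in bad.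
Qed.

Theorem lemma2p23
  (V E : finType) (s t : E -> V) (V' E' : finType) (s' t' : E' -> V')
  (C : {set V}) (C' : {set V'}) (chi : (Z -> E) -> (Z -> E')) :
  no_sink_source s t -> no_sink_source s' t' ->
  is_terminal s t C -> (forall D, is_terminal s t D -> D = C) ->
  is_terminal s' t' C' -> (forall D, is_terminal s' t' D -> D = C') ->
  conjugacy (in_edge_shift s t) (in_edge_shift s' t') chi ->
  (forall x, in_edge_shift_on s t C x -> in_edge_shift_on s' t' C' (chi x)) /\
  (forall y, in_edge_shift_on s' t' C' y ->
     exists x, in_edge_shift_on s t C x /\ chi x = y).
Proof.
move=> ns ns' tC uC tC' uC' [fX [[g [gY [gf [fg [cf cg]]]]] fsh]].
split; first exact: (part1 ns ns' tC uC tC' fX gY fg cf fsh).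
have shX : forall (VV EE : finType) (ss tt : EE -> VV) x,
    in_edge_shift ss tt x -> in_edge_shift ss tt (Defs.shift x).
  by move=> VV EE ss tt x hx; exact: (tr_in 1 hx).
have gsh : forall y, in_edge_shift s' t' y -> g (Defs.shift y) = Defs.shift (g y).
  move=> y hy; rewrite -{1}(fg y hy) -fsh; last exact: gY.
  rewrite gf //; apply: shX; exact: gY.
move=> y hyC.
have hy : in_edge_shift s' t' y by move=> k; case: (hyC k) => _ [_ ->].
exists (g y); split; last exact: fg.
exact: (part1 ns' ns tC' uC' tC gY fX gf cg gsh hyC).
Qed.
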